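(* Let $S^1=\mathbb{R}/2\pi\mathbb{Z}$ with coordinate $\theta$, let $T>0$, and let $u:[0,T]\times S^1\to\mathbb{R}$ be a smooth solution of the Camassa-Holm equation (with the coefficients below) $$\partial_t u-\tfrac14\partial_{t\theta\theta}u+3\,\partial_\theta u\,u-\tfrac12\,\partial_{\theta\theta}u\,\partial_\theta u-\tfrac14\,\partial_{\theta\theta\theta}u\,u=0 .$$ Identify $S^1\times(0,\infty)$ with $\mathbb{R}^2\setminus\{0\}$ via polar coordinates $(\theta,r)\mapsto re^{i\theta}$, and define the time-dependent vector field $v$ on $\mathbb{R}^2\setminus\{0\}$ by $$v(t,\theta,r)=u(t,\theta)\,\partial_\theta+\tfrac{r}{2}\,\partial_\theta u(t,\theta)\,\partial_r .$$ Then there exists a smooth function $P:[0,T]\times(\mathbb{R}^2\setminus\{0\})\to\mathbb{R}$ (of the form $P(t,\theta,r)=\tfrac12 r^2p(t,\theta)$ for some smooth $p$) such that $v$ solves the incompressible Euler equation on $\mathbb{R}^2\setminus\{0\}$ with respect to the density $\rho=r^{-4}\,\mathrm{Leb}$: $$\partial_t v+\nabla_v v=-\nabla P,\qquad \nabla\cdot(\rho v)=0,$$ where $\nabla$, $\nabla_v v$ and $\nabla\cdot$ refer to the Euclidean structure of $\mathbb{R}^2$.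
   Context: $\mathrm{Leb}$ denotes Lebesgue measure on $\mathbb{R}^2$; in polar coordinates $r^{-4}\mathrm{Leb}=r^{-3}\,\mathrm{d}r\,\mathrm{d}\theta$. The components $u$ and $\tfrac r2\partial_\theta u$ are the components of $v$ in the coordinate frame $(\partial_\theta,\partial_r)$ of polar coordinates. *)

(* Defs.v *)
From Stdlib Require Import Reals List ClassicalEpsilon.
Open Scope R_scope.

(** Partial derivatives, chosen classically (meaningful where they exist). *)
Definition pd (f : R -> R) (x : R) : R :=
  epsilon (inhabits 0) (fun l => derivable_pt_lim f x l).

Definition pd_t (f : R -> R -> R) : R -> R -> R := fun a b => pd (fun s => f s b) a.
Definition pd_th (f : R -> R -> R) : R -> R -> R := fun a b => pd (fun s => f a s) b.

Definition pdT (f : R -> R -> R -> R) : R -> R -> R -> R :=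
  fun t x y => pd (fun s => f s x y) t.
Definition pdX (f : R -> R -> R -> R) : R -> R -> R -> R :=
  fun t x y => pd (fun s => f t s y) x.
Definition pdY (f : R -> R -> R -> R) : R -> R -> R -> R :=
  fun t x y => pd (fun s => f t x s) y.

Definition cont2 (f : R -> R -> R) : Prop :=
  forall a b eps, 0 < eps -> exists del, 0 < del /\
    forall a' b', Rabs (a' - a) < del -> Rabs (b' - b) < del ->
      Rabs (f a' b' - f a b) < eps.

Definition cont3_on (U : R -> R -> R -> Prop) (f : R -> R -> R -> R) : Prop :=
  forall t x y, U t x y -> forall eps, 0 < eps -> exists del, 0 < del /\
    forall t' x' y', U t' x' y' -> Rabs (t' - t) < del -> Rabs (x' - x) < del ->
      Rabs (y' - y) < del -> Rabs (f t' x' y' - f t x y) < eps.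

Fixpoint iter_d2 (ds : list bool) (f : R -> R -> R) : R -> R -> R :=
  match ds with
  | nil => f
  | b :: ds' => (if b then pd_t else pd_th) (iter_d2 ds' f)
  end.

Definition smooth2 (f : R -> R -> R) : Prop :=
  forall ds : list bool,
    cont2 (iter_d2 ds f) /\
    (forall a b, derivable_pt_lim (fun s => iter_d2 ds f s b) a (pd_t (iter_d2 ds f) a b)) /\
    (forall a b, derivable_pt_lim (fun s => iter_d2 ds f a s) b (pd_th (iter_d2 ds f) a b)).

Definition dir3 (n : nat) : (R -> R -> R -> R) -> R -> R -> R -> R :=
  match n with 0 => pdT | 1 => pdX | _ => pdY end.

Fixpoint iter_d3 (ds : list nat) (f : R -> R -> R -> R) : R -> R -> R -> R :=
  match ds with
  | nil => f
  | n :: ds' => dir3 n (iter_d3 ds' f)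
  end.

Definition smooth3_on (U : R -> R -> R -> Prop) (f : R -> R -> R -> R) : Prop :=
  forall ds : list nat,
    cont3_on U (iter_d3 ds f) /\
    (forall t x y, U t x y ->
       derivable_pt_lim (fun s => iter_d3 ds f s x y) t (pdT (iter_d3 ds f) t x y) /\
       derivable_pt_lim (fun s => iter_d3 ds f t s y) x (pdX (iter_d3 ds f) t x y) /\
       derivable_pt_lim (fun s => iter_d3 ds f t x s) y (pdY (iter_d3 ds f) t x y)).

Definition punctured (t x y : R) : Prop := 0 < x ^ 2 + y ^ 2.

Definition rho (x y : R) : R := / (x ^ 2 + y ^ 2) ^ 2.

Definition CH_eq (u : R -> R -> R) (t th : R) : Prop :=
  pd_t u t th - / 4 * pd_th (pd_th (pd_t u)) t th + 3 * pd_th u t th * u t th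
  - / 2 * pd_th (pd_th u) t th * pd_th u t th - / 4 * pd_th (pd_th (pd_th u)) t th * u t th = 0.

(* Main.v *)
Require Import Defs.
From Stdlib Require Import Reals.
From Stdlib Require Import Lra Lia Psatz ZArith Znumtheory ClassicalEpsilon FunctionalExtensionality PropExtensionality.
Open Scope R_scope.


Lemma pd_spec f x l : derivable_pt_lim f x l -> pd f x = l.
Proof.
  intro H. unfold pd.
  apply (uniqueness_limite f x); [|exact H].
  apply (epsilon_spec (inhabits 0) (fun l => derivable_pt_lim f x l)). eauto.
Qed.

Lemma pd_ext f g x y : (forall l, derivable_pt_lim f x l <-> derivable_pt_lim g y l) -> pd f x = pd g y.
Proof.
  intro H. unfold pd. f_equal. extensionality l. apply propositional_extensionality. apply H.
Qed.

Lemma D_eq f x l l' : l = l' -> derivable_pt_lim f x l -> derivable_pt_lim f x l'.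
Proof. intros ->; auto. Qed.

Lemma D_ext f g x l : (forall s, f s = g s) -> derivable_pt_lim g x l -> derivable_pt_lim f x l.
Proof. intros H. replace f with g; auto. extensionality s; auto. Qed.

Lemma D_loc f g x l d : 0 < d -> (forall s, Rabs (s - x) < d -> f s = g s) ->
  derivable_pt_lim g x l -> derivable_pt_lim f x l.
Proof.
  intros Hd Heq H eps Heps. destruct (H eps Heps) as [del Hdel].
  assert (Hm : 0 < Rmin del d) by (apply Rmin_pos; [apply cond_pos|lra]).
  exists (mkposreal _ Hm). intros h Hh Hlt. simpl in Hlt.
  rewrite !Heq.
  - apply Hdel; auto. apply Rlt_le_trans with (1:=Hlt), Rmin_l.
  - unfold Rminus; rewrite Rplus_opp_r, Rabs_R0; lra.
  - replace (x + h - x) with h by ring. apply Rlt_le_trans with (1:=Hlt), Rmin_r.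
Qed.

Lemma D_const c x : derivable_pt_lim (fun _ => c) x 0.
Proof. exact (derivable_pt_lim_const c x). Qed.
Lemma D_id x : derivable_pt_lim (fun s => s) x 1.
Proof. exact (derivable_pt_lim_id x). Qed.
Lemma D_plus f g x a b : derivable_pt_lim f x a -> derivable_pt_lim g x b ->
  derivable_pt_lim (fun s => f s + g s) x (a + b).
Proof. intros; exact (derivable_pt_lim_plus f g x a b H H0). Qed.
Lemma D_minus f g x a b : derivable_pt_lim f x a -> derivable_pt_lim g x b ->
  derivable_pt_lim (fun s => f s - g s) x (a - b).
Proof. intros; exact (derivable_pt_lim_minus f g x a b H H0). Qed.
Lemma D_mult f g x a b : derivable_pt_lim f x a -> derivable_pt_lim g x b ->
  derivable_pt_lim (fun s => f s * g s) x (a * g x + f x * b).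
Proof. intros; exact (derivable_pt_lim_mult f g x a b H H0). Qed.
Lemma D_comp f g x a b : derivable_pt_lim f x a -> derivable_pt_lim g (f x) b ->
  derivable_pt_lim (fun s => g (f s)) x (b * a).
Proof. intros; exact (derivable_pt_lim_comp f g x a b H H0). Qed.
Lemma D_inv f x a : derivable_pt_lim f x a -> f x <> 0 ->
  derivable_pt_lim (fun s => / f s) x (- a / (f x * f x)).
Proof.
  intros H Hn.
  assert (H2 := derivable_pt_lim_div (fun _ => 1) f x 0 a (D_const 1 x) H Hn).
  eapply D_eq; [|eapply D_ext; [|exact H2]].
  - unfold Rsqr; field; auto.
  - intro s. unfold div_fct, Rdiv. ring.
Qed.


Definition per (f : R -> R -> R) := forall t th, f t (th + 2 * PI) = f t th.

Lemma D_shift g a c l : derivable_pt_lim g (a + c) l <-> derivable_pt_lim (fun s => g (s + c)) a l.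
Proof.
  unfold derivable_pt_lim. split; intros H eps He; destruct (H eps He) as [d Hd]; exists d;
  intros h H1 H2; specialize (Hd h H1 H2).
  - replace (a + h + c) with (a + c + h) by ring. exact Hd.
  - replace (a + c + h) with (a + h + c) by ring. exact Hd.
Qed.

Lemma per_pd_t f : per f -> per (pd_t f).
Proof.
  intros H t th. unfold pd_t. f_equal. extensionality s. apply H.
Qed.

Lemma per_pd_th f : per f -> per (pd_th f).
Proof.
  intros H t th. unfold pd_th. apply pd_ext. intro l.
  rewrite D_shift. replace (fun s => f t (s + 2 * PI)) with (fun s => f t s); [tauto|].
  extensionality s. symmetry; apply H.
Qed.

Lemma per_iter u : per u -> forall ds, per (iter_d2 ds u).
Proof.
  intros H ds; induction ds as [|b ds IH]; simpl; auto.
  destruct b; [apply per_pd_t|apply per_pd_th]; auto.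
Qed.

Lemma per_m f : per f -> forall t th, f t (th - 2 * PI) = f t th.
Proof. intros H t th. rewrite <- (H t (th - 2*PI)). f_equal; ring. Qed.

Lemma per_nat f : per f -> forall t th n, f t (th + 2 * INR n * PI) = f t th.
Proof.
  intros H t th n; induction n as [|n IH].
  - simpl. f_equal; ring.
  - rewrite S_INR. rewrite <- (H t (th + 2 * INR n * PI)) in IH. rewrite <- IH. f_equal; ring.
Qed.

Lemma per_int f : per f -> forall t th (m : Z), f t (th + 2 * IZR m * PI) = f t th.
Proof.
  intros H t th m. destruct (Z_le_gt_dec 0 m) as [Hm|Hm].
  - destruct (Z_of_nat_complete m Hm) as [n ->]. rewrite <- INR_IZR_INZ. apply per_nat; auto.
  - assert (Hm' : (0 <= - m)%Z) by lia.
    destruct (Z_of_nat_complete _ Hm') as [n Hn].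
    replace m with (- Z.of_nat n)%Z by lia. rewrite opp_IZR, <- INR_IZR_INZ.
    rewrite <- (per_nat f H t (th + 2 * - INR n * PI) n). f_equal; ring.
Qed.

Lemma cos_2int (m : Z) : cos (2 * IZR m * PI) = 1.
Proof.
  set (f := fun (_ : R) (th : R) => cos th).
  assert (Hf : per f) by (intros t th; unfold f; rewrite <- (cos_period th 1); f_equal; simpl; ring).
  change (f 0 (2 * IZR m * PI) = 1). replace (2 * IZR m * PI) with (0 + 2 * IZR m * PI) by ring.
  rewrite per_int; auto. unfold f; apply cos_0.
Qed.

Lemma angle_eq a b : cos a = cos b -> sin a = sin b -> exists m : Z, a = b + 2 * IZR m * PI.
Proof.
  intros Hc Hs.
  assert (H0 : sin (a - b) = 0) by (rewrite sin_minus, Hc, Hs; ring).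
  assert (H1 : cos (a - b) = 1) by (rewrite cos_minus, Hc, Hs; rewrite <- (sin2_cos2 b); unfold Rsqr; ring).
  destruct (sin_eq_0_0 _ H0) as [k Hk].
  destruct (Zeven_odd_dec k) as [He|Ho].
  - destruct (Zeven_ex k He) as [m Hm]. exists m. rewrite Hm, mult_IZR in Hk. lra.
  - destruct (Zodd_ex k Ho) as [m Hm]. exfalso.
    rewrite Hm, plus_IZR, mult_IZR in Hk. rewrite Hk in H1.
    replace (((IZR 2 * IZR m) + IZR 1) * PI) with (2 * IZR m * PI + PI) in H1 by (simpl; ring).
    rewrite neg_cos, cos_2int in H1. lra.
Qed.


Definition ang (x y : R) : R :=
  if Rlt_dec 0 x then atan (y / x)
  else if Rlt_dec 0 y then PI / 2 - atan (x / y)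
  else if Rlt_dec y 0 then - (PI / 2) - atan (x / y)
  else PI.

Lemma atan_inv_pos q : 0 < q -> atan (/ q) = PI / 2 - atan q.
Proof. apply atan_inv. Qed.
Lemma atan_inv_neg q : q < 0 -> atan (/ q) = - (PI / 2) - atan q.
Proof.
  intro H. replace (/ q) with (- / (- q)) by (field; lra).
  rewrite atan_opp, atan_inv by lra. rewrite atan_opp. field.
Qed.

Lemma angA_pos x y : 0 < x -> ang x y = atan (y / x).
Proof. intro H; unfold ang; destruct (Rlt_dec 0 x); [auto|lra]. Qed.

Lemma angB_pos x y : 0 < y -> ang x y = PI / 2 - atan (x / y).
Proof.
  intro H; unfold ang; destruct (Rlt_dec 0 x).
  - replace (y / x) with (/ (x / y)) by (field; lra). apply atan_inv_pos.
    apply Rdiv_lt_0_compat; lra.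
  - destruct (Rlt_dec 0 y); [auto|lra].
Qed.

Lemma angB_neg x y : y < 0 -> ang x y = - (PI / 2) - atan (x / y).
Proof.
  intro H; unfold ang; destruct (Rlt_dec 0 x).
  - replace (y / x) with (/ (x / y)) by (field; lra). apply atan_inv_neg.
    replace (x / y) with (- (x / - y)) by (field; lra).
    assert (0 < x / - y) by (apply Rdiv_lt_0_compat; lra). lra.
  - destruct (Rlt_dec 0 y); [lra|]. destruct (Rlt_dec y 0); [auto|lra].
Qed.

Lemma angA_neg x y : x < 0 -> ang x y = PI + atan (y / x) \/ ang x y = PI + atan (y / x) - 2 * PI.
Proof.
  intro H. destruct (Rlt_dec 0 y) as [Hy|Hy]; [|destruct (Rlt_dec y 0) as [Hy'|Hy']].
  - left. rewrite angB_pos by auto. replace (y / x) with (/ (x / y)) by (field; lra).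
    rewrite atan_inv_neg. { lra. }
    replace (x / y) with (- (- x / y)) by (field; lra).
    assert (0 < - x / y) by (apply Rdiv_lt_0_compat; lra). lra.
  - right. rewrite angB_neg by auto. replace (y / x) with (/ (x / y)) by (field; lra).
    rewrite atan_inv_pos. field.
    replace (x / y) with ((- x) / (- y)) by (field; lra). apply Rdiv_lt_0_compat; lra.
  - left. assert (y = 0) by lra. subst. unfold ang.
    destruct (Rlt_dec 0 x); [lra|]. destruct (Rlt_dec 0 0); [lra|]. destruct (Rlt_dec 0 0); [lra|].
    replace (0 / x) with 0 by (field; lra). rewrite atan_0. field.
Qed.

Definition cA (x0 : R) := if Rlt_dec 0 x0 then 0 else PI.
Definition cB (y0 : R) := if Rlt_dec 0 y0 then PI / 2 else - (PI / 2).

Lemma hA h : per h -> forall x0, x0 <> 0 -> forall t x y, 0 < x * x0 ->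
  h t (ang x y) = h t (cA x0 + atan (y / x)).
Proof.
  intros Hp x0 Hx0 t x y Hx. unfold cA. destruct (Rlt_dec 0 x0) as [H|H].
  - rewrite angA_pos. f_equal; field.
    destruct (Rlt_dec 0 x); [auto|]. assert (x * x0 <= 0) by nra. lra.
  - assert (x < 0).
    { destruct (Rlt_dec x 0); auto. assert (x0 < 0) by lra.
      assert (x * x0 <= 0) by nra. lra. }
    destruct (angA_neg x y H0) as [->| ->]; auto. apply per_m; auto.
Qed.

Lemma hB h : per h -> forall y0, y0 <> 0 -> forall t x y, 0 < y * y0 ->
  h t (ang x y) = h t (cB y0 - atan (x / y)).
Proof.
  intros Hp y0 Hy0 t x y Hy. unfold cB. destruct (Rlt_dec 0 y0) as [H|H].
  - rewrite angB_pos; auto.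
    destruct (Rlt_dec 0 y); [auto|]. assert (y * y0 <= 0) by nra. lra.
  - assert (y < 0).
    { destruct (Rlt_dec y 0); auto. assert (y0 < 0) by lra.
      assert (y * y0 <= 0) by nra. lra. }
    rewrite angB_neg; auto.
Qed.

Lemma sqrt_fact a b : a <> 0 -> sqrt (a ^ 2 + b ^ 2) = Rabs a * sqrt (1 + (b / a)²).
Proof.
  intro Ha. rewrite <- (sqrt_square (Rabs a)) by apply Rabs_pos.
  rewrite <- sqrt_mult_alt by (apply Rmult_le_pos; apply Rabs_pos).
  f_equal. rewrite <- Rabs_mult, Rabs_pos_eq by (apply Rle_0_sqr). unfold Rsqr. field. auto.
Qed.

Lemma sqrt1_pos q : 0 < sqrt (1 + q²).
Proof. apply sqrt_lt_R0. pose proof (Rle_0_sqr q). lra. Qed.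

Lemma polar x y : 0 < x ^ 2 + y ^ 2 ->
  x = sqrt (x ^ 2 + y ^ 2) * cos (ang x y) /\ y = sqrt (x ^ 2 + y ^ 2) * sin (ang x y).
Proof.
  intro H. destruct (Rlt_dec 0 x) as [Hx|Hx]; [|destruct (Rlt_dec 0 y) as [Hy|Hy];
    [|destruct (Rlt_dec y 0) as [Hy'|Hy']]].
  - rewrite angA_pos, sqrt_fact, cos_atan, sin_atan, Rabs_pos_eq by lra.
    pose proof (sqrt1_pos (y/x)). split; field; lra.
  - rewrite angB_pos by lra. rewrite (Rplus_comm (x^2)), sqrt_fact by lra.
    rewrite cos_shift, sin_shift, cos_atan, sin_atan, Rabs_pos_eq by lra.
    pose proof (sqrt1_pos (x/y)). split; field; lra.
  - rewrite angB_neg by lra. rewrite (Rplus_comm (x^2)), sqrt_fact by lra.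
    replace (- (PI / 2) - atan (x / y)) with ((PI/2 - atan (x/y)) - PI) by field.
    rewrite (cos_minus (PI/2 - atan (x/y)) PI), (sin_minus (PI/2 - atan (x/y)) PI), cos_PI, sin_PI, cos_shift, sin_shift, cos_atan, sin_atan, Rabs_left by lra.
    pose proof (sqrt1_pos (x/y)). split; field; lra.
  - assert (y = 0) by lra. subst. assert (x < 0).
    { destruct (Rlt_dec x 0); auto. assert (x = 0) by lra. subst. simpl in H. lra. }
    unfold ang. destruct (Rlt_dec 0 x); [lra|]. destruct (Rlt_dec 0 0); [lra|]. destruct (Rlt_dec 0 0); [lra|].
    rewrite cos_PI, sin_PI. replace (x ^ 2 + 0 ^ 2) with (x * x) by field.
    rewrite <- (Rmult_opp_opp x x), sqrt_square by lra. split; field.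
Qed.

Lemma ang_polar r th : 0 < r -> exists m : Z, th = ang (r * cos th) (r * sin th) + 2 * IZR m * PI.
Proof.
  intro Hr. set (X := r * cos th). set (Y := r * sin th).
  assert (HS : X ^ 2 + Y ^ 2 = r * r).
  { unfold X, Y. pose proof (sin2_cos2 th) as E. unfold Rsqr in E. transitivity (r * r * (sin th * sin th + cos th * cos th)); [ring|rewrite E; ring]. }
  assert (Hp : 0 < X ^ 2 + Y ^ 2) by (rewrite HS; apply Rmult_lt_0_compat; lra).
  destruct (polar X Y Hp) as [H1 H2]. rewrite HS, sqrt_square in H1, H2 by lra.
  apply angle_eq.
  - apply Rmult_eq_reg_l with r; [|lra]. change (r * cos th) with X. lra.
  - apply Rmult_eq_reg_l with r; [|lra]. change (r * sin th) with Y. lra.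
Qed.


Lemma sum_sq_nz x y : x <> 0 \/ y <> 0 -> x ^ 2 + y ^ 2 <> 0.
Proof. intros [H|H]; nra. Qed.

Lemma dA_x c y x : x <> 0 -> derivable_pt_lim (fun s => c + atan (y / s)) x (- y / (x ^ 2 + y ^ 2)).
Proof.
  intro Hx.
  assert (H := D_plus _ _ x _ _ (D_const c x)
     (D_comp _ atan x _ _ (D_mult _ _ x _ _ (D_const y x) (D_inv _ x _ (D_id x) Hx)) (derivable_pt_lim_atan (y / x)))).
  refine (D_eq _ _ _ _ _ H).
  assert (x ^ 2 + y ^ 2 <> 0) by (apply sum_sq_nz; auto).
  field. auto.
Qed.

Lemma dA_y c x y : x <> 0 -> derivable_pt_lim (fun s => c + atan (s / x)) y (x / (x ^ 2 + y ^ 2)).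
Proof.
  intro Hx.
  assert (H := D_plus _ _ y _ _ (D_const c y)
     (D_comp _ atan y _ _ (D_mult _ _ y _ _ (D_id y) (D_const (/ x) y)) (derivable_pt_lim_atan (y / x)))).
  refine (D_eq _ _ _ _ _ H).
  assert (x ^ 2 + y ^ 2 <> 0) by (apply sum_sq_nz; auto).
  field. auto.
Qed.

Lemma dB_y c x y : y <> 0 -> derivable_pt_lim (fun s => c - atan (x / s)) y (x / (x ^ 2 + y ^ 2)).
Proof.
  intro Hy.
  assert (H := D_minus _ _ y _ _ (D_const c y)
     (D_comp _ atan y _ _ (D_mult _ _ y _ _ (D_const x y) (D_inv _ y _ (D_id y) Hy)) (derivable_pt_lim_atan (x / y)))).
  refine (D_eq _ _ _ _ _ H).
  assert (x ^ 2 + y ^ 2 <> 0) by (apply sum_sq_nz; auto).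
  field. auto.
Qed.

Lemma dB_x c y x : y <> 0 -> derivable_pt_lim (fun s => c - atan (s / y)) x (- y / (x ^ 2 + y ^ 2)).
Proof.
  intro Hy.
  assert (H := D_minus _ _ x _ _ (D_const c x)
     (D_comp _ atan x _ _ (D_mult _ _ x _ _ (D_id x) (D_const (/ y) x)) (derivable_pt_lim_atan (x / y)))).
  refine (D_eq _ _ _ _ _ H).
  assert (x ^ 2 + y ^ 2 <> 0) by (apply sum_sq_nz; auto).
  field. auto.
Qed.

Lemma near_sign s x : x <> 0 -> Rabs (s - x) < Rabs x -> 0 < s * x.
Proof.
  intros Hx Hs. destruct (Rlt_dec 0 x) as [H|H].
  - rewrite (Rabs_pos_eq x) in Hs by lra. apply Rabs_def2 in Hs. destruct Hs. apply Rmult_lt_0_compat; lra.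
  - assert (x < 0) by lra. rewrite (Rabs_left x) in Hs by lra. apply Rabs_def2 in Hs. destruct Hs. rewrite <- Rmult_opp_opp; apply Rmult_lt_0_compat; lra.
Qed.

Definition Dth (h : R -> R -> R) := forall a b, derivable_pt_lim (fun s => h a s) b (pd_th h a b).

Lemma atom_dx h t x y : Dth h -> per h -> per (pd_th h) -> 0 < x ^ 2 + y ^ 2 ->
  derivable_pt_lim (fun s => h t (ang s y)) x (pd_th h t (ang x y) * (- y / (x ^ 2 + y ^ 2))).
Proof.
  intros Hd Hp Hp' Hr. destruct (Req_dec y 0) as [Hy|Hy].
  - subst y. assert (Hx : x <> 0) by (intro; subst; simpl in Hr; lra).
    apply D_loc with (g := fun s => h t (cA x + atan (0 / s))) (d := Rabs x).
    + apply Rabs_pos_lt; auto.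
    + intros s Hs. apply hA; auto.
      apply near_sign; auto.
    + rewrite (hA (pd_th h) Hp' x Hx t x 0) by nra.
      apply (D_comp (fun s => cA x + atan (0 / s)) (h t)). apply dA_x; auto. apply Hd.
  - apply D_ext with (g := fun s => h t (cB y - atan (s / y))).
    + intro s. apply hB; auto. nra.
    + rewrite (hB (pd_th h) Hp' y Hy t x y) by nra.
      apply (D_comp (fun s => cB y - atan (s / y)) (h t)). apply dB_x; auto. apply Hd.
Qed.

Lemma atom_dy h t x y : Dth h -> per h -> per (pd_th h) -> 0 < x ^ 2 + y ^ 2 ->
  derivable_pt_lim (fun s => h t (ang x s)) y (pd_th h t (ang x y) * (x / (x ^ 2 + y ^ 2))).
Proof.
  intros Hd Hp Hp' Hr. destruct (Req_dec x 0) as [Hx|Hx].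
  - subst x. assert (Hy : y <> 0) by (intro; subst; simpl in Hr; lra).
    apply D_loc with (g := fun s => h t (cB y - atan (0 / s))) (d := Rabs y).
    + apply Rabs_pos_lt; auto.
    + intros s Hs. apply hB; auto.
      apply near_sign; auto.
    + rewrite (hB (pd_th h) Hp' y Hy t 0 y) by nra.
      apply (D_comp (fun s => cB y - atan (0 / s)) (h t)). apply dB_y; auto. apply Hd.
  - apply D_ext with (g := fun s => h t (cA x + atan (s / x))).
    + intro s. apply hA; auto. nra.
    + rewrite (hA (pd_th h) Hp' x Hx t x y) by nra.
      apply (D_comp (fun s => cA x + atan (s / x)) (h t)). apply dA_y; auto. apply Hd.
Qed.


Definition cont2_at (h : R -> R -> R) a b := forall eps, 0 < eps -> exists del, 0 < del /\
    forall a' b', Rabs (a' - a) < del -> Rabs (b' - b) < del -> Rabs (h a' b' - h a b) < eps.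

Lemma cont2_plus a b : cont2_at Rplus a b.
Proof.
  intros eps He. exists (eps / 2). split; [lra|]. intros a' b' H1 H2.
  replace (a' + b' - (a + b)) with ((a' - a) + (b' - b)) by ring.
  eapply Rle_lt_trans; [apply Rabs_triang|]. lra.
Qed.

Lemma cont2_mult a b : cont2_at Rmult a b.
Proof.
  intros eps He. set (K := 1 + Rabs a + Rabs b).
  assert (HK : 1 <= K) by (unfold K; pose proof (Rabs_pos a); pose proof (Rabs_pos b); lra).
  exists (Rmin 1 (eps / (2 * K))). split.
  { apply Rmin_pos; [lra|]. apply Rdiv_lt_0_compat; lra. }
  intros a' b' H1 H2.
  assert (Hd1 : Rmin 1 (eps / (2 * K)) <= 1) by apply Rmin_l.
  assert (Hd2 : Rmin 1 (eps / (2 * K)) <= eps / (2 * K)) by apply Rmin_r.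
  set (d := Rmin 1 (eps / (2 * K))) in *.
  replace (a' * b' - a * b) with ((a' - a) * (b' - b) + a * (b' - b) + b * (a' - a)) by ring.
  assert (E1 : Rabs ((a' - a) * (b' - b)) <= d).
  { rewrite Rabs_mult. pose proof (Rabs_pos (a'-a)); pose proof (Rabs_pos (b'-b)). nra. }
  assert (E2 : Rabs (a * (b' - b)) <= Rabs a * d).
  { rewrite Rabs_mult. pose proof (Rabs_pos a); pose proof (Rabs_pos (b'-b)). nra. }
  assert (E3 : Rabs (b * (a' - a)) <= Rabs b * d).
  { rewrite Rabs_mult. pose proof (Rabs_pos b); pose proof (Rabs_pos (a'-a)). nra. }
  assert (E4 : K * d <= eps / 2).
  { apply Rmult_le_compat_l with (r := K) in Hd2; [|lra].
    replace (K * (eps / (2 * K))) with (eps / 2) in Hd2 by (field; lra). lra. }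
  eapply Rle_lt_trans; [apply Rabs_triang|].
  eapply Rle_lt_trans; [apply Rplus_le_compat_r, Rabs_triang|].
  unfold K in E4. lra.
Qed.

Section CAsec.
Variable X : Type.
Variable N : R -> X -> Prop.
Hypothesis Nmono : forall d1 d2 z, 0 < d1 -> d1 <= d2 -> N d1 z -> N d2 z.

Definition CA (f : X -> R) (c : R) := forall eps, 0 < eps -> exists d, 0 < d /\
  forall z, N d z -> Rabs (f z - c) < eps.

Lemma CA_const c : CA (fun _ => c) c.
Proof. intros eps He. exists 1. split; [lra|]. intros. unfold Rminus; rewrite Rplus_opp_r, Rabs_R0; lra. Qed.

Lemma CA_comp2 h f g a b : cont2_at h a b -> CA f a -> CA g b -> CA (fun z => h (f z) (g z)) (h a b).
Proof.
  intros Hh Hf Hg eps He. destruct (Hh eps He) as [del [Hdel Hd]].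
  destruct (Hf del Hdel) as [d1 [Hd1 H1]]. destruct (Hg del Hdel) as [d2 [Hd2 H2]].
  exists (Rmin d1 d2). split; [apply Rmin_pos; auto|]. intros z Hz.
  assert (0 < Rmin d1 d2) by (apply Rmin_pos; auto).
  apply Hd; [apply H1|apply H2]; eapply Nmono; eauto; [apply Rmin_l|apply Rmin_r].
Qed.

Lemma CA_comp1 g f b : continuity_pt g b -> CA f b -> CA (fun z => g (f z)) (g b).
Proof.
  intros Hg Hf eps He. destruct (Hg eps He) as [del [Hdel Hd]].
  destruct (Hf del Hdel) as [d1 [Hd1 H1]]. exists d1; split; auto. intros z Hz.
  destruct (Req_dec (f z) b) as [E|E].
  - rewrite E. unfold Rminus; rewrite Rplus_opp_r, Rabs_R0; lra.
  - apply (Hd (f z)). split; [split; [exact I|auto]|]. exact (H1 z Hz).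
Qed.

Lemma CA_plus f g a b : CA f a -> CA g b -> CA (fun z => f z + g z) (a + b).
Proof. intros; apply (CA_comp2 Rplus); auto; apply cont2_plus. Qed.
Lemma CA_mult f g a b : CA f a -> CA g b -> CA (fun z => f z * g z) (a * b).
Proof. intros; apply (CA_comp2 Rmult); auto; apply cont2_mult. Qed.

Lemma CA_local f g c : (exists d0, 0 < d0 /\ forall z, N d0 z -> f z = g z) -> CA g c -> CA f c.
Proof.
  intros [d0 [Hd0 Heq]] Hg eps He. destruct (Hg eps He) as [d [Hd H]].
  exists (Rmin d d0). assert (0 < Rmin d d0) by (apply Rmin_pos; auto). split; auto.
  intros z Hz. rewrite Heq by (eapply Nmono; eauto; apply Rmin_r).
  apply H; eapply Nmono; eauto; apply Rmin_l.
Qed.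

Lemma CA_ext f g c : (forall d z, N d z -> f z = g z) -> CA g c -> CA f c.
Proof. intros H Hg eps He. destruct (Hg eps He) as [d [Hd H1]]. exists d; split; auto.
  intros z Hz. rewrite (H d z Hz). auto. Qed.
End CAsec.

Arguments CA {X}.

Definition N3 (t x y : R) (d : R) (z : R * R * R) : Prop :=
  punctured (fst (fst z)) (snd (fst z)) (snd z) /\ Rabs (fst (fst z) - t) < d /\
  Rabs (snd (fst z) - x) < d /\ Rabs (snd z - y) < d.
Definition F3 (f : R -> R -> R -> R) (z : R * R * R) : R := f (fst (fst z)) (snd (fst z)) (snd z).

Lemma N3_mono t x y : forall d1 d2 z, 0 < d1 -> d1 <= d2 -> N3 t x y d1 z -> N3 t x y d2 z.
Proof. intros d1 d2 z _ H [H0 [H1 [H2 H3]]]. repeat split; auto; lra. Qed.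

Lemma CA_cont3 f : (forall t x y, punctured t x y -> CA (N3 t x y) (F3 f) (f t x y)) -> cont3_on punctured f.
Proof.
  intros H t x y Hp eps He. destruct (H t x y Hp eps He) as [d [Hd Hz]]. exists d; split; auto.
  intros t' x' y' Hp' H1 H2 H3. apply (Hz (t', x', y')). repeat split; auto.
Qed.

Definition N2 (a b : R) (d : R) (z : R * R) : Prop := Rabs (fst z - a) < d /\ Rabs (snd z - b) < d.
Definition F2 (f : R -> R -> R) (z : R * R) : R := f (fst z) (snd z).

Lemma N2_mono a b : forall d1 d2 z, 0 < d1 -> d1 <= d2 -> N2 a b d1 z -> N2 a b d2 z.
Proof. intros d1 d2 z _ H [H1 H2]. split; lra. Qed.

Lemma CA_cont2 f : (forall a b, CA (N2 a b) (F2 f) (f a b)) <-> cont2 f.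
Proof.
  split.
  - intros H a b eps He. destruct (H a b eps He) as [d [Hd Hz]]. exists d; split; auto.
    intros a' b' H1 H2. apply (Hz (a', b')). split; auto.
  - intros H a b eps He. destruct (H a b eps He) as [d [Hd Hz]]. exists d; split; auto.
    intros z [H1 H2]. apply Hz; auto.
Qed.


Lemma iter_d2_app ds b h : iter_d2 (ds ++ b :: nil) h = iter_d2 ds ((if b then pd_t else pd_th) h).
Proof. induction ds as [|c ds IH]; simpl; auto. rewrite IH; auto. Qed.

Lemma smooth2_pd_t h : smooth2 h -> smooth2 (pd_t h).
Proof. intros H ds. rewrite <- (iter_d2_app ds true). apply H. Qed.
Lemma smooth2_pd_th h : smooth2 h -> smooth2 (pd_th h).
Proof. intros H ds. rewrite <- (iter_d2_app ds false). apply H. Qed.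

Lemma CA2_fst a b : CA (N2 a b) (fun z => fst z) a.
Proof. intros eps He. exists eps. split; auto. intros z [H1 H2]. auto. Qed.

Section K2sec.
Variable u : R -> R -> R.
Hypothesis Hu : smooth2 u.

Inductive K2 : (R -> R -> R) -> Prop :=
| K2b ds : K2 (iter_d2 ds u)
| K2c c : K2 (fun _ _ => c)
| K2p f g : K2 f -> K2 g -> K2 (fun a b => f a b + g a b)
| K2m f g : K2 f -> K2 g -> K2 (fun a b => f a b * g a b).

Lemma K2_ext f g : K2 f -> (forall a b, g a b = f a b) -> K2 g.
Proof. intros H E. replace g with f; auto. extensionality a; extensionality b; auto. Qed.

Lemma K2_all f : K2 f -> cont2 f /\ K2 (pd_t f) /\ K2 (pd_th f) /\
  (forall a b, derivable_pt_lim (fun s => f s b) a (pd_t f a b)) /\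
  (forall a b, derivable_pt_lim (fun s => f a s) b (pd_th f a b)).
Proof.
  induction 1 as [ds|c|f g Hf [Cf [Tf [Sf [Df1 Df2]]]] Hg [Cg [Tg [Sg [Dg1 Dg2]]]]
                 |f g Hf [Cf [Tf [Sf [Df1 Df2]]]] Hg [Cg [Tg [Sg [Dg1 Dg2]]]]].
  - destruct (Hu ds) as [H1 [H2 H3]]. repeat split; auto.
    + exact (K2b (true :: ds)).
    + exact (K2b (false :: ds)).
  - assert (E1 : pd_t (fun _ _ => c) = fun _ _ => 0).
    { extensionality a; extensionality b. apply pd_spec, D_const. }
    assert (E2 : pd_th (fun _ _ => c) = fun _ _ => 0).
    { extensionality a; extensionality b. apply pd_spec, D_const. }
    rewrite E1, E2. repeat split.
    + apply CA_cont2. intros a b. apply CA_const.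
    + apply K2c.
    + apply K2c.
    + intros; apply D_const.
    + intros; apply D_const.
  - assert (E1 : pd_t (fun a b => f a b + g a b) = fun a b => pd_t f a b + pd_t g a b).
    { extensionality a; extensionality b. apply pd_spec, D_plus; auto. }
    assert (E2 : pd_th (fun a b => f a b + g a b) = fun a b => pd_th f a b + pd_th g a b).
    { extensionality a; extensionality b. apply pd_spec, D_plus; auto. }
    rewrite E1, E2. repeat split.
    + apply CA_cont2. intros a b. apply (CA_plus _ _ (N2_mono a b)); apply CA_cont2; auto.
    + apply K2p; auto.
    + apply K2p; auto.
    + intros; apply D_plus; auto.
    + intros; apply D_plus; auto.
  - assert (E1 : pd_t (fun a b => f a b * g a b) = fun a b => pd_t f a b * g a b + f a b * pd_t g a b).
    { extensionality a; extensionality b. apply pd_spec. apply (D_mult (fun s => f s b) (fun s => g s b)); auto. }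
    assert (E2 : pd_th (fun a b => f a b * g a b) = fun a b => pd_th f a b * g a b + f a b * pd_th g a b).
    { extensionality a; extensionality b. apply pd_spec. apply (D_mult (fun s => f a s) (fun s => g a s)); auto. }
    rewrite E1, E2. repeat split.
    + apply CA_cont2. intros a b. apply (CA_mult _ _ (N2_mono a b)); apply CA_cont2; auto.
    + apply K2p; apply K2m; auto.
    + apply K2p; apply K2m; auto.
    + intros a b; apply (D_mult (fun s => f s b) (fun s => g s b)); auto.
    + intros a b; apply (D_mult (fun s => f a s) (fun s => g a s)); auto.
Qed.

Lemma K2_smooth f : K2 f -> smooth2 f.
Proof.
  intros H ds. assert (HK : K2 (iter_d2 ds f)).
  { induction ds as [|b ds IH]; simpl; auto. destruct (K2_all _ IH) as [_ [? [? _]]]. destruct b; auto. }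
  destruct (K2_all _ HK) as [? [_ [_ [? ?]]]]. auto.
Qed.
End K2sec.


Inductive K : (R -> R -> R -> R) -> Prop :=
| Kc c : K (fun _ _ _ => c)
| Kx : K (fun _ x _ => x)
| Ky : K (fun _ _ y => y)
| Ki : K (fun _ x y => / (x * x + y * y))
| Ka h : smooth2 h -> per h -> K (fun t x y => h t (ang x y))
| Kp f g : K f -> K g -> K (fun t x y => f t x y + g t x y)
| Km f g : K f -> K g -> K (fun t x y => f t x y * g t x y)
| Ke f g : K f -> (forall t x y, punctured t x y -> g t x y = f t x y) -> K g.

Definition Dall (f ft fx fy : R -> R -> R -> R) := forall t x y, punctured t x y ->
  derivable_pt_lim (fun s => f s x y) t (ft t x y) /\
  derivable_pt_lim (fun s => f t s y) x (fx t x y) /\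
  derivable_pt_lim (fun s => f t x s) y (fy t x y).

Lemma punct_x t x y : punctured t x y -> exists d, 0 < d /\ forall s, Rabs (s - x) < d -> punctured t s y.
Proof.
  unfold punctured. intro H. destruct (Req_dec y 0) as [Hy|Hy].
  - subst. assert (x <> 0) by (intro; subst; simpl in H; lra).
    exists (Rabs x). split; [apply Rabs_pos_lt; auto|]. intros s Hs.
    pose proof (near_sign s x H0 Hs). nra.
  - exists 1. split; [lra|]. intros. nra.
Qed.
Lemma punct_y t x y : punctured t x y -> exists d, 0 < d /\ forall s, Rabs (s - y) < d -> punctured t x s.
Proof.
  unfold punctured. intro H. destruct (Req_dec x 0) as [Hx|Hx].
  - subst. assert (y <> 0) by (intro; subst; simpl in H; lra).
    exists (Rabs y). split; [apply Rabs_pos_lt; auto|]. intros s Hs.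
    pose proof (near_sign s y H0 Hs). nra.
  - exists 1. split; [lra|]. intros. nra.
Qed.

Lemma CA3_t t x y : CA (N3 t x y) (fun z => fst (fst z)) t.
Proof. intros eps He. exists eps. split; auto. intros z [_ [H _]]. auto. Qed.
Lemma CA3_x t x y : CA (N3 t x y) (fun z => snd (fst z)) x.
Proof. intros eps He. exists eps. split; auto. intros z [_ [_ [H _]]]. auto. Qed.
Lemma CA3_y t x y : CA (N3 t x y) (fun z => snd z) y.
Proof. intros eps He. exists eps. split; auto. intros z [_ [_ [_ H]]]. auto. Qed.

Lemma cont_of_deriv g b l : derivable_pt_lim g b l -> continuity_pt g b.
Proof. intro H. apply derivable_continuous_pt. exists l. exact H. Qed.

Lemma smooth2_Dth h : smooth2 h -> Dth h.
Proof. intros H. exact (proj2 (proj2 (H nil))). Qed.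
Lemma smooth2_cont h : smooth2 h -> cont2 h.
Proof. intros H. exact (proj1 (H nil)). Qed.

Lemma Ka_cont h t x y : smooth2 h -> per h -> punctured t x y ->
  CA (N3 t x y) (F3 (fun t x y => h t (ang x y))) (h t (ang x y)).
Proof.
  intros Hs Hp Hpu. assert (Hc := smooth2_cont h Hs). unfold punctured in Hpu.
  destruct (Req_dec x 0) as [Hx|Hx].
  - subst x. assert (Hy : y <> 0) by (intro; subst; simpl in Hpu; lra).
    rewrite (hB h Hp y Hy t 0 y) by nra.
    apply CA_local with (g := fun z => h (fst (fst z)) (cB y - atan (snd (fst z) / snd z))).
    + apply N3_mono.
    + exists (Rabs y). split; [apply Rabs_pos_lt; auto|]. intros z [_ [_ [_ Hz]]].
      unfold F3. apply hB; auto. apply near_sign; auto.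
    + apply (CA_comp2 _ _ (N3_mono t 0 y) h); [exact (fun eps He => Hc _ _ eps He)|apply CA3_t|].
      apply (CA_comp1 _ (N3 t 0 y) (fun q => cB y - atan q)).
      * eapply cont_of_deriv. apply D_minus; [apply D_const|apply derivable_pt_lim_atan].
      * apply (CA_mult _ _ (N3_mono t 0 y)); [apply CA3_x|].
        apply (CA_comp1 _ (N3 t 0 y) Rinv); [|apply CA3_y].
        eapply cont_of_deriv. apply (D_inv (fun s => s)); [apply D_id|auto].
  - rewrite (hA h Hp x Hx t x y) by nra.
    apply CA_local with (g := fun z => h (fst (fst z)) (cA x + atan (snd z / snd (fst z)))).
    + apply N3_mono.
    + exists (Rabs x). split; [apply Rabs_pos_lt; auto|]. intros z [_ [_ [Hz _]]].
      unfold F3. apply hA; auto. apply near_sign; auto.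
    + apply (CA_comp2 _ _ (N3_mono t x y) h); [exact (fun eps He => Hc _ _ eps He)|apply CA3_t|].
      apply (CA_comp1 _ (N3 t x y) (fun q => cA x + atan q)).
      * eapply cont_of_deriv. apply D_plus; [apply D_const|apply derivable_pt_lim_atan].
      * apply (CA_mult _ _ (N3_mono t x y)); [apply CA3_y|].
        apply (CA_comp1 _ (N3 t x y) Rinv); [|apply CA3_x].
        eapply cont_of_deriv. apply (D_inv (fun s => s)); [apply D_id|auto].
Qed.

Lemma K_all f : K f -> (forall t x y, punctured t x y -> CA (N3 t x y) (F3 f) (f t x y)) /\
  exists ft fx fy, K ft /\ K fx /\ K fy /\ Dall f ft fx fy.
Proof.
  induction 1 as [c| | | |h Hs Hp|f g Hf [Cf [ft1 [fx1 [fy1 [? [? [? Df]]]]]]] Hg [Cg [ft2 [fx2 [fy2 [? [? [? Dg]]]]]]]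
    |f g Hf [Cf [ft1 [fx1 [fy1 [? [? [? Df]]]]]]] Hg [Cg [ft2 [fx2 [fy2 [? [? [? Dg]]]]]]]
    |f g Hf [Cf [ft1 [fx1 [fy1 [? [? [? Df]]]]]]] Heq].
  - split. { intros; apply CA_const. }
    exists (fun _ _ _ => 0), (fun _ _ _ => 0), (fun _ _ _ => 0). repeat split; try apply Kc; apply D_const.
  - split. { intros; apply CA3_x. }
    exists (fun _ _ _ => 0), (fun _ _ _ => 1), (fun _ _ _ => 0). repeat split; try apply Kc;
      try apply D_const; apply D_id.
  - split. { intros; apply CA3_y. }
    exists (fun _ _ _ => 0), (fun _ _ _ => 0), (fun _ _ _ => 1). repeat split; try apply Kc;
      try apply D_const; apply D_id.
  - split.
    { intros t x y Hpu. unfold punctured in Hpu.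
      apply (CA_comp1 _ (N3 t x y) Rinv (fun z => snd (fst z) * snd (fst z) + snd z * snd z)).
      - eapply cont_of_deriv. apply (D_inv (fun s => s)); [apply D_id|nra].
      - apply (CA_plus _ _ (N3_mono t x y)); apply (CA_mult _ _ (N3_mono t x y));
          (apply CA3_x || apply CA3_y). }
    exists (fun _ _ _ => 0), (fun _ x y => -2 * x * (/ (x * x + y * y) * / (x * x + y * y))),
      (fun _ x y => -2 * y * (/ (x * x + y * y) * / (x * x + y * y))).
    split; [apply Kc|]. split.
    { eapply Ke; [apply Km; [apply Km; [apply Kc|apply Kx]|apply Km; apply Ki]|intros; reflexivity]. }
    split.
    { eapply Ke; [apply Km; [apply Km; [apply Kc|apply Ky]|apply Km; apply Ki]|intros; reflexivity]. }
    intros t x y Hpu. unfold punctured in Hpu. assert (Hr : x * x + y * y <> 0) by nra.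
    split; [apply D_const|split].
    + refine (D_eq _ _ _ _ _ (D_inv (fun s => s * s + y * y) x _ (D_plus _ _ _ _ _ (D_mult _ _ _ _ _ (D_id x) (D_id x)) (D_const (y * y) x)) Hr)).
      field; auto.
    + refine (D_eq _ _ _ _ _ (D_inv (fun s => x * x + s * s) y _ (D_plus _ _ _ _ _ (D_const (x * x) y) (D_mult _ _ _ _ _ (D_id y) (D_id y))) Hr)).
      field; auto.
  - split. { intros; apply Ka_cont; auto. }
    exists (fun t x y => pd_t h t (ang x y)),
      (fun t x y => pd_th h t (ang x y) * (- y / (x ^ 2 + y ^ 2))),
      (fun t x y => pd_th h t (ang x y) * (x / (x ^ 2 + y ^ 2))).
    split. { apply Ka; [apply smooth2_pd_t|apply per_pd_t]; auto. }
    split.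
    { eapply Ke; [apply Km; [apply (Ka (pd_th h)); [apply smooth2_pd_th|apply per_pd_th]; auto
        |apply Km; [apply Km; [apply (Kc (-1))|apply Ky]|apply Ki]]|].
      intros t x y Hpu. unfold punctured in Hpu. simpl. f_equal. field. nra. }
    split.
    { eapply Ke; [apply Km; [apply (Ka (pd_th h)); [apply smooth2_pd_th|apply per_pd_th]; auto
        |apply Km; [apply Kx|apply Ki]]|].
      intros t x y Hpu. unfold punctured in Hpu. simpl. f_equal. field. nra. }
    intros t x y Hpu. split; [|split].
    + exact (proj1 (proj2 (Hs nil)) t (ang x y)).
    + apply atom_dx; auto. apply smooth2_Dth; auto. apply per_pd_th; auto.
    + apply atom_dy; auto. apply smooth2_Dth; auto. apply per_pd_th; auto.
  - split. { intros t x y Hpu. apply (CA_plus _ _ (N3_mono t x y)); auto. }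
    exists (fun t x y => ft1 t x y + ft2 t x y), (fun t x y => fx1 t x y + fx2 t x y),
      (fun t x y => fy1 t x y + fy2 t x y).
    split; [apply Kp; auto|]. split; [apply Kp; auto|]. split; [apply Kp; auto|].
    intros t x y Hpu; destruct (Df t x y Hpu) as [? [? ?]]; destruct (Dg t x y Hpu) as [? [? ?]].
    repeat split; apply D_plus; auto.
  - split. { intros t x y Hpu. apply (CA_mult _ _ (N3_mono t x y)); auto. }
    exists (fun t x y => ft1 t x y * g t x y + f t x y * ft2 t x y),
      (fun t x y => fx1 t x y * g t x y + f t x y * fx2 t x y),
      (fun t x y => fy1 t x y * g t x y + f t x y * fy2 t x y).
    split; [apply Kp; apply Km; auto|]. split; [apply Kp; apply Km; auto|]. split; [apply Kp; apply Km; auto|].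
    intros t x y Hpu; destruct (Df t x y Hpu) as [? [? ?]]; destruct (Dg t x y Hpu) as [? [? ?]].
    split; [|split].
    + apply (D_mult (fun s => f s x y) (fun s => g s x y)); auto.
    + apply (D_mult (fun s => f t s y) (fun s => g t s y)); auto.
    + apply (D_mult (fun s => f t x s) (fun s => g t x s)); auto.
  - split.
    { intros t x y Hpu. rewrite Heq by auto. apply (CA_ext _ (N3 t x y)) with (g := F3 f); auto.
      intros d z [Hz _]. apply Heq. exact Hz. }
    exists ft1, fx1, fy1. split; [auto|]. split; [auto|]. split; [auto|].
    intros t x y Hpu; destruct (Df t x y Hpu) as [? [? ?]]. split; [|split].
    + apply D_ext with (g := fun s => f s x y); auto.
    + destruct (punct_x t x y Hpu) as [d [Hd Hd']].
      apply D_loc with (g := fun s => f t s y) (d := d); auto.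
    + destruct (punct_y t x y Hpu) as [d [Hd Hd']].
      apply D_loc with (g := fun s => f t x s) (d := d); auto.
Qed.

Lemma K_smooth f : K f -> smooth3_on punctured f.
Proof.
  intros H ds. assert (HK : K (iter_d3 ds f)).
  { induction ds as [|n ds IH]; simpl; auto.
    destruct (K_all _ IH) as [_ [ft [fx [fy [Kt [Kx' [Ky' D]]]]]]].
    destruct n as [|[|n]]; simpl.
    - apply Ke with ft; auto. intros t x y Hp. apply pd_spec. apply (D t x y Hp).
    - apply Ke with fx; auto. intros t x y Hp. apply pd_spec. apply (D t x y Hp).
    - apply Ke with fy; auto. intros t x y Hp. apply pd_spec. apply (D t x y Hp). }
  destruct (K_all _ HK) as [C [ft [fx [fy [_ [_ [_ D]]]]]]].
  split. { apply CA_cont3; auto. }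
  intros t x y Hp. destruct (D t x y Hp) as [D1 [D2 D3]].
  unfold pdT, pdX, pdY. rewrite (pd_spec _ _ _ D1), (pd_spec _ _ _ D2), (pd_spec _ _ _ D3). auto.
Qed.

From Coquelicot Require Import Coquelicot.
Open Scope R_scope.


Lemma Derive_pd f x l : derivable_pt_lim f x l -> Derive f x = pd f x.
Proof.
  intro H. rewrite (pd_spec _ _ _ H). apply is_derive_unique. apply is_derive_Reals. auto.
Qed.

Lemma schwarz_smooth (u : R -> R -> R) : smooth2 u -> pd_t (pd_th u) = pd_th (pd_t u).
Proof.
  intros Hu.
  destruct (Hu nil) as [C0 [T0 S0]]. destruct (Hu (cons true nil)) as [C1 [T1 S1]].
  destruct (Hu (cons false nil)) as [C2 [T2 S2]].
  destruct (Hu (cons true (cons false nil))) as [C3 [T3 S3]].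
  destruct (Hu (cons false (cons true nil))) as [C4 [T4 S4]]. simpl in *.
  assert (I1 : forall v, (fun z => Derive (fun t => u z t) v) = (fun z => pd_th u z v)).
  { intro v. extensionality z. apply (Derive_pd _ _ _ (S0 z v)). }
  assert (I2 : forall w, (fun z => Derive (fun t => u t z) w) = (fun z => pd_t u w z)).
  { intro w. extensionality z. apply (Derive_pd _ _ _ (T0 w z)). }
  assert (E1 : (fun a v => Derive (fun z => Derive (fun t => u z t) v) a) = pd_t (pd_th u)).
  { extensionality a; extensionality v. rewrite I1. apply (Derive_pd _ _ _ (T2 a v)). }
  assert (E2 : (fun w b => Derive (fun z => Derive (fun t => u t z) w) b) = pd_th (pd_t u)).
  { extensionality w; extensionality b. rewrite I2. apply (Derive_pd _ _ _ (S1 w b)). }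
  extensionality a; extensionality b.
  assert (HS := Schwarz u a b).
  rewrite <- (equal_f (equal_f E1 a) b), <- (equal_f (equal_f E2 a) b). simpl.
  apply HS.
  - exists (mkposreal 1 Rlt_0_1). intros u' v _ _. rewrite I1, I2. repeat split.
    + exists (pd_t u u' v). apply is_derive_Reals, T0.
    + exists (pd_th u u' v). apply is_derive_Reals, S0.
    + exists (pd_t (pd_th u) u' v). apply is_derive_Reals, T2.
    + exists (pd_th (pd_t u) u' v). apply is_derive_Reals, S1.
  - rewrite E1. intros eps. destruct (C3 a b eps (cond_pos eps)) as [d [Hd H]].
    exists (mkposreal d Hd). intros; apply H; auto.
  - rewrite E2. intros eps. destruct (C4 a b eps (cond_pos eps)) as [d [Hd H]].
    exists (mkposreal d Hd). intros; apply H; auto.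
Qed.


Definition pfun (u : R -> R -> R) (a b : R) : R :=
  -1 * (/ 2 * pd_t (pd_th u) a b + / 4 * (pd_th u a b * pd_th u a b) - u a b * u a b
        + / 2 * (u a b * pd_th (pd_th u) a b)).

Lemma pfun_K2 u : K2 u (pfun u).
Proof.
  eapply (K2_ext u).
  - eapply (K2m u); [apply (K2c u (-1))|].
    eapply (K2p u); [eapply (K2p u); [eapply (K2p u)|]|].
    + eapply (K2m u); [apply (K2c u (/2))|apply (K2b u (cons true (cons false nil)))].
    + eapply (K2m u); [apply (K2c u (/4))|]. eapply (K2m u); apply (K2b u (cons false nil)).
    + eapply (K2m u); [apply (K2c u (-1))|]. eapply (K2m u); apply (K2b u nil).
    + eapply (K2m u); [apply (K2c u (/2))|]. eapply (K2m u); [apply (K2b u nil)|apply (K2b u (cons false (cons false nil)))].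
  - intros a b. unfold pfun. simpl. field.
Qed.

Lemma pfun_per u : per u -> per (pfun u).
Proof.
  intros H t th. unfold pfun.
  rewrite (per_pd_t _ (per_pd_th _ H)), (per_pd_th _ H), (per_pd_th _ (per_pd_th _ H)), H. auto.
Qed.

Definition Pfun (u : R -> R -> R) (t x y : R) : R := / 2 * (x * x + y * y) * pfun u t (ang x y).

Lemma Pfun_K u : smooth2 u -> per u -> K (Pfun u).
Proof.
  intros Hu Hp. eapply Ke.
  - apply Km; [apply Km; [apply (Kc (/2))|apply Kp; [apply Km; apply Kx|apply Km; apply Ky]]|].
    apply (Ka (pfun u)). apply (K2_smooth u Hu), pfun_K2. apply pfun_per; auto.
  - intros; reflexivity.
Qed.

Lemma V_form (u : R -> R -> R) (V1 V2 : R -> R -> R -> R) :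
    (forall t th r, 0 < r ->
       V1 t (r * cos th) (r * sin th)
         = u t th * (- (r * sin th)) + r / 2 * pd_th u t th * cos th /\
       V2 t (r * cos th) (r * sin th)
         = u t th * (r * cos th) + r / 2 * pd_th u t th * sin th) ->
  forall t x y, punctured t x y ->
    V1 t x y = - y * u t (ang x y) + / 2 * x * pd_th u t (ang x y) /\
    V2 t x y = x * u t (ang x y) + / 2 * y * pd_th u t (ang x y).
Proof.
  intros HV t x y Hp. destruct (polar x y Hp) as [Hx Hy].
  set (a := ang x y) in *. set (r := sqrt (x ^ 2 + y ^ 2)) in *.
  assert (Hr : 0 < r) by (apply sqrt_lt_R0; auto).
  destruct (HV t a r Hr) as [E1 E2]. rewrite <- Hx, <- Hy in E1, E2.
  rewrite E1, E2. split.
  - rewrite Hx. field.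
  - rewrite Hy. field.
Qed.

Ltac dtac := repeat (first [apply D_const | apply D_id | apply atom_dx | apply atom_dy
  | match goal with H : forall a b : R, derivable_pt_lim _ _ _ |- _ => apply H end
  | apply D_plus | apply D_minus | apply D_mult | apply D_inv]).

Lemma D_opp f x a : derivable_pt_lim f x a -> derivable_pt_lim (fun s => - f s) x (- a).
Proof. intro H. exact (derivable_pt_lim_opp f x a H). Qed.

Ltac dtac2 := repeat (first [apply D_const | apply D_id | apply atom_dx | apply atom_dy
  | match goal with H : forall a b : R, derivable_pt_lim _ _ _ |- _ => apply H end
  | apply D_plus | apply D_minus | apply D_mult | apply D_opp | apply D_inv]).


Theorem mainTheorem1 :
  forall (T : R) (u : R -> R -> R),
    0 < T ->
    smooth2 u ->
    (forall t th, u t (th + 2 * PI) = u t th) ->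
    (forall t th, 0 <= t <= T -> CH_eq u t th) ->
    forall V1 V2 : R -> R -> R -> R,
    (forall t th r, 0 < r ->
       V1 t (r * cos th) (r * sin th)
         = u t th * (- (r * sin th)) + r / 2 * pd_th u t th * cos th /\
       V2 t (r * cos th) (r * sin th)
         = u t th * (r * cos th) + r / 2 * pd_th u t th * sin th) ->
    exists (P : R -> R -> R -> R) (p : R -> R -> R),
      smooth3_on punctured P /\
      smooth2 p /\
      (forall t th, p t (th + 2 * PI) = p t th) /\
      (forall t th r, 0 < r ->
         P t (r * cos th) (r * sin th) = / 2 * r ^ 2 * p t th) /\
      (forall t x y, 0 <= t <= T -> 0 < x ^ 2 + y ^ 2 ->
         pdT V1 t x y + V1 t x y * pdX V1 t x y + V2 t x y * pdY V1 t x y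
           = - pdX P t x y /\
         pdT V2 t x y + V1 t x y * pdX V2 t x y + V2 t x y * pdY V2 t x y
           = - pdY P t x y /\
         pdX (fun t' x' y' => rho x' y' * V1 t' x' y') t x y
           + pdY (fun t' x' y' => rho x' y' * V2 t' x' y') t x y = 0).
Proof.
  intros T u HT Hu Hper HCH V1 V2 HV.
  assert (Hpp : per (pfun u)) by (apply pfun_per; exact Hper).
  assert (Hps : smooth2 (pfun u)) by (apply (K2_smooth u Hu), pfun_K2).
  exists (Pfun u), (pfun u).
  split; [apply K_smooth, Pfun_K; auto|].
  split; [auto|]. split; [exact Hpp|]. split.
  { intros t th r Hr. destruct (ang_polar r th Hr) as [m Hm].
    assert (E : pfun u t th = pfun u t (ang (r * cos th) (r * sin th))).
    { rewrite <- (per_int _ Hpp t (ang (r * cos th) (r * sin th)) m). f_equal. exact Hm. }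
    unfold Pfun. rewrite E. f_equal. f_equal.
    pose proof (sin2_cos2 th) as S2. unfold Rsqr in S2.
    transitivity (r * r * (sin th * sin th + cos th * cos th)); [ring|rewrite S2; ring]. }
  intros t x y Ht Hpu.
  assert (Dt0 : forall a b, derivable_pt_lim (fun s => u s b) a (pd_t u a b))
    by exact (proj1 (proj2 (Hu nil))).
  assert (Dt1 : forall a b, derivable_pt_lim (fun s => pd_th u s b) a (pd_t (pd_th u) a b))
    by exact (proj1 (proj2 (Hu (cons false nil)))).
  assert (Dh0 : forall a b, derivable_pt_lim (fun s => u a s) b (pd_th u a b))
    by exact (proj2 (proj2 (Hu nil))).
  assert (Dh1 : forall a b, derivable_pt_lim (fun s => pd_th u a s) b (pd_th (pd_th u) a b))
    by exact (proj2 (proj2 (Hu (cons false nil)))).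
  assert (Dh2 : forall a b, derivable_pt_lim (fun s => pd_th (pd_th u) a s) b (pd_th (pd_th (pd_th u)) a b))
    by exact (proj2 (proj2 (Hu (cons false (cons false nil))))).
  assert (DhF : forall a b, derivable_pt_lim (fun s => pd_t (pd_th u) a s) b (pd_th (pd_t (pd_th u)) a b))
    by exact (proj2 (proj2 (Hu (cons true (cons false nil))))).
  assert (Dhp : forall a b, derivable_pt_lim (fun s => pfun u a s) b (pd_th (pfun u) a b))
    by exact (proj2 (proj2 (Hps nil))).
  assert (P0 := Hper). assert (P1 : per (pd_th u)) by (apply per_pd_th; auto).
  assert (P2 : per (pd_th (pd_th u))) by (apply per_pd_th; auto).
  assert (P3 : per (pd_th (pfun u))) by (apply per_pd_th; auto).
  assert (VF := V_form u V1 V2 HV).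
  destruct (punct_x t x y Hpu) as [dx [Hdx Hdx']].
  destruct (punct_y t x y Hpu) as [dy [Hdy Hdy']].
  eassert (ET1 : pdT V1 t x y = _).
  { unfold pdT. apply pd_spec.
    apply D_ext with (g := fun s => - y * u s (ang x y) + / 2 * x * pd_th u s (ang x y)).
    - intro s. apply (VF s x y Hpu).
    - dtac2. }
  eassert (ET2 : pdT V2 t x y = _).
  { unfold pdT. apply pd_spec.
    apply D_ext with (g := fun s => x * u s (ang x y) + / 2 * y * pd_th u s (ang x y)).
    - intro s. apply (VF s x y Hpu).
    - dtac2. }
  eassert (EX1 : pdX V1 t x y = _).
  { unfold pdX. apply pd_spec.
    apply D_loc with (g := fun s => - y * u t (ang s y) + / 2 * s * pd_th u t (ang s y)) (d := dx); auto.
    - intros s Hs. apply (VF t s y (Hdx' s Hs)).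
    - dtac2; auto. }
  eassert (EX2 : pdX V2 t x y = _).
  { unfold pdX. apply pd_spec.
    apply D_loc with (g := fun s => s * u t (ang s y) + / 2 * y * pd_th u t (ang s y)) (d := dx); auto.
    - intros s Hs. apply (VF t s y (Hdx' s Hs)).
    - dtac2; auto. }
  eassert (EY1 : pdY V1 t x y = _).
  { unfold pdY. apply pd_spec.
    apply D_loc with (g := fun s => - s * u t (ang x s) + / 2 * x * pd_th u t (ang x s)) (d := dy); auto.
    - intros s Hs. apply (VF t x s (Hdy' s Hs)).
    - dtac2; auto. }
  eassert (EY2 : pdY V2 t x y = _).
  { unfold pdY. apply pd_spec.
    apply D_loc with (g := fun s => x * u t (ang x s) + / 2 * s * pd_th u t (ang x s)) (d := dy); auto.
    - intros s Hs. apply (VF t x s (Hdy' s Hs)).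
    - dtac2; auto. }
  eassert (EPX : pdX (Pfun u) t x y = _).
  { unfold pdX, Pfun. apply pd_spec. dtac2; auto. }
  eassert (EPY : pdY (Pfun u) t x y = _).
  { unfold pdY, Pfun. apply pd_spec. dtac2; auto. }
  eassert (EPh : pd_th (pfun u) t (ang x y) = _).
  { unfold pd_th at 1. apply pd_spec. clear Dhp. unfold pfun. dtac2. }
  eassert (ER1 : pdX (fun t' x' y' => rho x' y' * V1 t' x' y') t x y = _).
  { unfold pdX. apply pd_spec.
    apply D_loc with (g := fun s => / ((s * s + y * y) * (s * s + y * y)) *
       (- y * u t (ang s y) + / 2 * s * pd_th u t (ang s y))) (d := dx); auto.
    - intros s Hs. rewrite (proj1 (VF t s y (Hdx' s Hs))). unfold rho. f_equal. f_equal. ring.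
    - dtac2; auto; cbv beta; unfold punctured in Hpu; nra. }
  eassert (ER2 : pdY (fun t' x' y' => rho x' y' * V2 t' x' y') t x y = _).
  { unfold pdY. apply pd_spec.
    apply D_loc with (g := fun s => / ((x * x + s * s) * (x * x + s * s)) *
       (x * u t (ang x s) + / 2 * s * pd_th u t (ang x s))) (d := dy); auto.
    - intros s Hs. rewrite (proj2 (VF t x s (Hdy' s Hs))). unfold rho. f_equal. f_equal. ring.
    - dtac2; auto; cbv beta; unfold punctured in Hpu; nra. }
  rewrite ET1, ET2, EX1, EX2, EY1, EY2, EPX, EPY, ER1, ER2, EPh.
  destruct (VF t x y Hpu) as [-> ->]. unfold rho. unfold pfun. cbv beta.
  rewrite (schwarz_smooth u Hu).
  assert (CH := HCH t (ang x y) Ht). unfold CH_eq in CH.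
  set (a := ang x y) in *.
  set (A := u t a) in *. set (B := pd_th u t a) in *. set (C := pd_th (pd_th u) t a) in *.
  set (Dd := pd_th (pd_th (pd_th u)) t a) in *. set (E0 := pd_t u t a) in *.
  set (F0 := pd_th (pd_t u) t a) in *. set (G0 := pd_th (pd_th (pd_t u)) t a) in *.
  clearbody a A B C Dd E0 F0 G0.
  assert (HE : E0 = / 4 * G0 - 3 * B * A + / 2 * C * B + / 4 * Dd * A) by lra.
  rewrite HE. unfold punctured in Hpu. assert (Hr : x ^ 2 + y ^ 2 <> 0) by lra.
  assert (Hr' : x * x + y * y <> 0) by nra.
  split; [|split]; field; auto.
Qed.
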